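(* Let $N\ge3$ and let $\|\cdot\|:\mathbb{C}^N\to\mathbb{R}$ be a norm that is permutation-invariant (i.e. $\|\mathbf{v}\|$ is unchanged by permuting the components of $\mathbf{v}$), satisfies $\|(1,1)\|\neq1$, and satisfies \[ \|\mathbf{v}+\mathbf{w}\|=\big\|\big(\|\mathbf{v}\|,\|\mathbf{w}\|\big)\big\| \] for all $\mathbf{v},\mathbf{w}\in\mathbb{C}^N$ with disjoint supports. Then there exists a real number $p\ge1$ such that for every vector $\mathbf{c}\in\mathbb{C}^N$ whose components all have rational absolute values, \[ \|\mathbf{c}\|=\Big(\sum_{i=1}^N|c_i|^p\Big)^{1/p}. \]
   Context: Vectors with fewer than $N$ entries are identified with vectors in $\mathbb{C}^N$ by padding with zeros; e.g. $(a,b)$ denotes $(a,b,0,\dots,0)\in\mathbb{C}^N$ and $(1,1)=(1,1,0,\dots,0)$. The support of a vector is the set of indices of its nonzero components. *)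

(* Defs.v *)
From HB Require Import structures.
From mathcomp Require Import all_boot all_order all_algebra all_fingroup.
From mathcomp Require Import complex.
From mathcomp Require Import all_classical all_reals all_analysis.
Set Implicit Arguments. Unset Strict Implicit. Unset Printing Implicit Defensive.
Import Order.TTheory GRing.Theory Num.Theory.
Local Open Scope ring_scope.

Definition cabs (R : realType) (z : R[i]) : R := ComplexField.Normc.normc z.

Section Defs.
Variables (R : realType) (N : nat).

Definition is_norm (nrm : 'rV[R[i]]_N -> R) : Prop :=
  [/\ (forall v, nrm v = 0 -> v = 0),
      (forall (a : R[i]) v, nrm (a *: v) = cabs a * nrm v) &
      (forall v w, nrm (v + w) <= nrm v + nrm w)].

Definition perm_invariant (nrm : 'rV[R[i]]_N -> R) : Prop :=
  forall (s : 'S_N) v, nrm (col_perm s v) = nrm v.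

Definition vec2 (a b : R[i]) : 'rV[R[i]]_N :=
  \row_(j < N) (if val j == 0%N then a else if val j == 1%N then b else 0).

Definition disjoint_supp (v w : 'rV[R[i]]_N) : Prop :=
  forall j, v 0 j = 0 \/ w 0 j = 0.

Definition cR (x : R) : R[i] := (x%:C)%C.

Definition is_rat (x : R) : Prop := exists q : rat, x = ratr q.
End Defs.

(* Main.v *)
Require Import Defs.
From HB Require Import structures.
From mathcomp Require Import all_boot all_order all_algebra all_fingroup.
From mathcomp Require Import complex.
From mathcomp Require Import all_classical all_reals all_analysis.
From mathcomp Require Import lra.
Import Order.TTheory GRing.Theory Num.Theory.
Local Open Scope ring_scope.

Section Proof.
Variables (R : realType) (N : nat) (nrm : 'rV[R[i]]_N -> R).
Hypothesis N3 : (3 <= N)%N.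
Hypothesis Hn : is_norm nrm.
Hypothesis Hp : perm_invariant nrm.
Hypothesis Hd : forall v w : 'rV[R[i]]_N, disjoint_supp v w ->
     nrm (v + w) = nrm (vec2 N (cR (nrm v)) (cR (nrm w))).

Implicit Types (u v w : 'rV[R[i]]_N) (a b : R[i]) (x y t : R).

Definition f (x y : R) := nrm (vec2 N (cR x) (cR y)).

Lemma HD v w : disjoint_supp v w -> nrm (v + w) = f (nrm v) (nrm w).
Proof. exact: Hd. Qed.

Lemma cabs_cR (x : R) : cabs (cR x) = `|x|.
Proof. by rewrite /cabs /cR /= expr0n /= addr0 sqrtr_sqr. Qed.

Lemma cabsM (a b : R[i]) : cabs (a * b) = cabs a * cabs b.
Proof. exact: ComplexField.Normc.normcM. Qed.

Lemma cabs_ge0 (a : R[i]) : 0 <= cabs a.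
Proof. by case: a => x y; rewrite /cabs /= sqrtr_ge0. Qed.

Lemma cabsN (a : R[i]) : cabs (- a) = cabs a.
Proof. exact: normcN. Qed.

Lemma cabs1 : @cabs R 1 = 1.
Proof. exact: ComplexField.Normc.normc1. Qed.

Lemma cabs0 : @cabs R 0 = 0.
Proof. exact: ComplexField.Normc.normc0. Qed.

Lemma nrmZ a v : nrm (a *: v) = cabs a * nrm v.
Proof. by case: Hn => H1 H2 H3; auto. Qed.

Lemma nrmD v w : nrm (v + w) <= nrm v + nrm w.
Proof. by case: Hn => H1 H2 H3; auto. Qed.

Lemma nrm_eq0 v : nrm v = 0 -> v = 0.
Proof. by case: Hn => H1 H2 H3; auto. Qed.

Lemma nrm0 : nrm 0 = 0.
Proof. by rewrite -(scale0r (0 : 'rV[R[i]]_N)) nrmZ cabs0 mul0r. Qed.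

Lemma nrmN v : nrm (- v) = nrm v.
Proof. by rewrite -scaleN1r nrmZ cabsN cabs1 mul1r. Qed.

Lemma nrm_ge0 v : 0 <= nrm v.
Proof.
have := nrmD v (- v); rewrite subrr nrm0 nrmN.
move=> h; lra.
Qed.

Lemma nrmB v w : nrm (v - w) <= nrm v + nrm w.
Proof. by rewrite -(nrmN w) nrmD. Qed.

Lemma nrm_lip v w : `|nrm v - nrm w| <= nrm (v - w).
Proof.
have h1 := nrmD (v - w) w; rewrite subrK in h1.
have h2 := nrmD (w - v) v; rewrite subrK -opprB nrmN in h2.
rewrite ler_norml; apply/andP; split; lra.
Qed.


Local Notation ee j := (delta_mx 0 j : 'rV[R[i]]_N).

Definition i0 : 'I_N := Ordinal (leq_trans (isT : (0 < 3)%N) N3).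
Definition i1 : 'I_N := Ordinal (leq_trans (isT : (1 < 3)%N) N3).
Definition i2 : 'I_N := Ordinal N3.

Lemma eE (a : R[i]) (j k : 'I_N) : (a *: ee j) 0 k = if k == j then a else 0.
Proof. by rewrite !mxE eqxx /=; case: (k == j); rewrite ?mulr1 ?mulr0. Qed.

Lemma disj_sym v w : disjoint_supp v w -> disjoint_supp w v.
Proof. by move=> h k; case: (h k); auto. Qed.

Lemma disjDl u v w : disjoint_supp u w -> disjoint_supp v w ->
  disjoint_supp (u + v) w.
Proof.
move=> h1 h2 k; case: (h1 k) => a; last by right.
case: (h2 k) => b; last by right.
by left; rewrite mxE a b addr0.
Qed.

Lemma disj_e (a b : R[i]) (i j : 'I_N) : i != j ->
  disjoint_supp (a *: ee i) (b *: ee j).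
Proof.
move=> ij k; rewrite !eE; case: (eqVneq k i) => [ki|]; last by left.
by right; rewrite ki (negbTE ij).
Qed.

Lemma disj0 v : disjoint_supp v 0.
Proof. by move=> k; right; rewrite mxE. Qed.

Lemma vec2E (a b : R[i]) : vec2 N a b = a *: ee i0 + b *: ee i1.
Proof.
apply/rowP => k; rewrite [in RHS]mxE !eE mxE.
case: k => [[|[|k]] Hk] //=.
  by rewrite addr0.
by rewrite add0r.
by rewrite addr0.
Qed.

Lemma nrm_e0 : nrm (ee i0) = 1.
Proof.
have h : nrm (ee i0 + 0) = f (nrm (ee i0)) (nrm 0) by apply: HD; apply: disj0.
rewrite addr0 nrm0 /f vec2E /cR /= scale0r addr0 nrmZ cabs_cR in h.
have ne : nrm (ee i0) != 0.
  apply/eqP => /nrm_eq0 /rowP /(_ i0); rewrite !mxE eqxx /=.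
  by move/eqP; rewrite oner_eq0.
rewrite ger0_norm ?nrm_ge0 // in h.
have : nrm (ee i0) * (nrm (ee i0) - 1) = 0 by rewrite mulrBr mulr1 -h subrr.
by move/eqP; rewrite mulf_eq0 (negbTE ne) subr_eq0 /= => /eqP.
Qed.

Lemma nrm_e j : nrm (ee j) = 1.
Proof.
rewrite -nrm_e0 -(Hp (tperm i0 j) (ee i0)); congr nrm.
apply/rowP => k; rewrite !mxE /=.
by rewrite (canF_eq (tpermK i0 j)) tpermL.
Qed.

Lemma nrm_ae a j : nrm (a *: ee j) = cabs a.
Proof. by rewrite nrmZ nrm_e mulr1. Qed.

Lemma nrm_vec2' a b : nrm (a *: ee i0 + b *: ee i1) = f (cabs a) (cabs b).
Proof. by rewrite HD ?nrm_ae //; apply: disj_e. Qed.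

Lemma nrm_vec2 a b : nrm (vec2 N a b) = f (cabs a) (cabs b).
Proof. by rewrite vec2E nrm_vec2'. Qed.

Lemma f_abs x y : f x y = f `|x| `|y|.
Proof. by rewrite {1}/f nrm_vec2 !cabs_cR. Qed.

Lemma f_ge0 x y : 0 <= f x y.
Proof. exact: nrm_ge0. Qed.

Lemma f_x0 x : f x 0 = `|x|.
Proof. by rewrite /f vec2E /cR /= scale0r addr0 nrm_ae cabs_cR. Qed.

Lemma f_0y y : f 0 y = `|y|.
Proof. by rewrite /f vec2E /cR /= scale0r add0r nrm_ae cabs_cR. Qed.

Lemma f_le x y : f x y <= `|x| + `|y|.
Proof. by have := nrmD (cR x *: ee i0) (cR y *: ee i1); rewrite !nrm_ae !cabs_cR /f vec2E. Qed.

Lemma f_hom t x y : 0 <= t -> f (t * x) (t * y) = t * f x y.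
Proof.
move=> t0; rewrite /f !vec2E /cR !rmorphM /= -!scalerA -scalerDr nrmZ.
by rewrite -/(cR t) cabs_cR ger0_norm.
Qed.

Lemma f_ge x y : `|x| <= f x y.
Proof.
pose u := cR x *: ee i0; pose w := cR y *: ee i1.
have h := nrmD (u + w) (u - w).
have e1 : u + w + (u - w) = (cR x + cR x) *: ee i0.
  by rewrite scalerDl -/u addrACA subrr addr0.
rewrite e1 nrm_ae /u /w -scaleNr nrm_vec2' !nrm_vec2' cabsN in h.
have e2 : cR x + cR x = cR (x + x) by rewrite /cR rmorphD.
rewrite e2 !cabs_cR -mulr2n normrMn mulr2n in h.
rewrite f_abs; lra.
Qed.

Lemma f_assoc (a b c : R) : 0 <= a -> 0 <= b -> 0 <= c ->
  f (f a b) c = f a (f b c).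
Proof.
move=> a0 b0 c0.
pose A := cR a *: ee i0; pose B := cR b *: ee i1; pose C := cR c *: ee i2.
have d01 : disjoint_supp A B by apply: disj_e.
have d02 : disjoint_supp A C by apply: disj_e.
have d12 : disjoint_supp B C by apply: disj_e.
have h1 : nrm (A + B + C) = f (f a b) c.
  rewrite HD; last by apply: disjDl.
  by rewrite nrm_vec2' /C nrm_ae !cabs_cR !ger0_norm.
have h2 : nrm (A + (B + C)) = f a (f b c).
  rewrite HD; last by apply: disj_sym; apply: disjDl; apply: disj_sym.
  rewrite HD // /A /B /C !nrm_ae !cabs_cR !ger0_norm //.
by rewrite -h1 -h2 addrA.
Qed.


Definition pre (k : nat) v : 'rV[R[i]]_N :=
  \row_(j < N) (if (j < k)%N then v 0 j else 0).

Lemma pre0 v : pre 0 v = 0.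
Proof. by apply/rowP => j; rewrite !mxE. Qed.

Lemma preN v : pre N v = v.
Proof. by apply/rowP => j; rewrite !mxE ltn_ord. Qed.

Lemma preS v (K : 'I_N) : pre K.+1 v = pre K v + v 0 K *: ee K.
Proof.
apply/rowP => j; rewrite [in RHS]mxE eE !mxE ltnS leq_eqVlt.
case: (eqVneq j K) => [->|jK]; first by rewrite eqxx ltnn add0r.
by rewrite val_eqE (negbTE jK) addr0.
Qed.

Lemma disj_pre v (K : 'I_N) : disjoint_supp (pre K v) (v 0 K *: ee K).
Proof.
move=> j; rewrite eE !mxE; case: (eqVneq j K) => [->|]; last by right.
by left; rewrite ltnn.
Qed.

Lemma nrm_preS v (K : 'I_N) : nrm (pre K.+1 v) = f (nrm (pre K v)) (cabs (v 0 K)).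
Proof. by rewrite preS HD ?nrm_ae //; apply: disj_pre. Qed.

Lemma nrm_abs v w : (forall j, cabs (v 0 j) = cabs (w 0 j)) -> nrm v = nrm w.
Proof.
move=> h; rewrite -(preN v) -(preN w).
have : (N <= N)%N by [].
elim: {-2}N => [|k IH] kN; first by rewrite !pre0.
have kN' : (k < N)%N by [].
have := nrm_preS v (Ordinal kN'); have := nrm_preS w (Ordinal kN'); rewrite /= => -> ->.
by rewrite IH ?h // ltnW.
Qed.

Definition s (n : nat) := iter n (fun x => f x 1) 0.

Arguments s : simpl never.
Arguments f : simpl never.

Lemma s0 : s 0 = 0. Proof. by []. Qed.
Lemma sS n : s n.+1 = f (s n) 1. Proof. by []. Qed.
Lemma s_ge0 n : 0 <= s n. Proof. by case: n => [|n] //; exact: f_ge0. Qed.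
Lemma s1 : s 1 = 1. Proof. by rewrite sS s0 f_0y normr1. Qed.

Lemma s_add m n : s (m + n) = f (s m) (s n).
Proof.
elim: n => [|n IH]; first by rewrite addn0 s0 f_x0 ger0_norm ?s_ge0.
by rewrite addnS !sS IH f_assoc ?s_ge0.
Qed.

Lemma s_mul m n : s (m * n) = s m * s n.
Proof.
elim: n => [|n IH]; first by rewrite muln0 s0 mulr0.
by rewrite mulnS addnC s_add IH sS -{2}(mulr1 (s m)) f_hom // s_ge0.
Qed.

Lemma s_succ n : s n <= s n.+1.
Proof. by rewrite sS; have := f_ge (s n) 1; rewrite ger0_norm ?s_ge0. Qed.

Lemma s_succ' n : s n.+1 <= s n + 1.
Proof. by rewrite sS; have := f_le (s n) 1; rewrite ger0_norm ?s_ge0 ?normr1. Qed.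

Lemma s_mono m n : (m <= n)%N -> s m <= s n.
Proof.
move=> /subnKC <-; elim: (n - m)%N => [|d IH]; first by rewrite addn0.
by rewrite addnS; apply: le_trans IH (s_succ _).
Qed.

Lemma s_le n : s n <= n%:R.
Proof.
elim: n => [|n IH]; first by rewrite s0.
by apply: le_trans (s_succ' n) _; rewrite -natr1 lerD2r.
Qed.

Lemma nrm_pre_s v (n : 'I_N -> nat) : (forall j, cabs (v 0 j) = s (n j)) ->
  forall k, (k <= N)%N -> nrm (pre k v) = s (\sum_(j < N | (j < k)%N) n j).
Proof.
move=> h; elim => [|k IH] kN.
  by rewrite pre0 nrm0 big_pred0 // => j; rewrite ltn0.
have kN' : (k < N)%N by [].
rewrite (nrm_preS v (Ordinal kN')) h IH; last exact: ltnW.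
have -> : (\sum_(j < N | (j < k.+1)%N) n j =
    n (Ordinal kN') + \sum_(j < N | (j < k)%N) n j)%N.
  rewrite (bigD1 (Ordinal kN')) //=; congr (_ + _)%N.
  by apply: eq_bigl => j; rewrite ltnS leq_eqVlt -val_eqE /=; case: ltngtP.
by rewrite addnC s_add.
Qed.

Lemma nrm_s v (n : 'I_N -> nat) : (forall j, cabs (v 0 j) = s (n j)) ->
  nrm v = s (\sum_(j < N) n j).
Proof.
move=> h; rewrite -(preN v) (@nrm_pre_s v n h N (leqnn N)).
by congr s; apply: eq_bigl => j; rewrite ltn_ord.
Qed.

Lemma nrm_le_sum v : nrm v <= \sum_(j < N) cabs (v 0 j).
Proof.
rewrite {1}(row_sum_delta v).
elim/big_ind2: _ => [|x1 x2 y1 y2 h1 h2|j _]; first by rewrite nrm0.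
  by apply: le_trans (nrmD _ _) _; apply: lerD.
by rewrite nrm_ae.
Qed.


Lemma bernoulli (d : R) k : 0 <= d -> 1 + k%:R * d <= (1 + d) ^+ k.
Proof.
move=> d0; elim: k => [|k IH]; first by rewrite mul0r addr0 expr0.
rewrite exprS -natr1.
have k0 : 0 <= k%:R :> R by [].
nra.
Qed.

Lemma ratio_le (x y C : R) : 0 < y -> 0 < C ->
  (forall k, x ^+ k <= C * y ^+ k) -> x <= y.
Proof.
move=> y0 C0 h; rewrite leNgt; apply/negP => yx.
pose d := x / y - 1.
have d0 : 0 < d by rewrite /d subr_gt0 ltr_pdivlMr // mul1r.
pose k := (Num.truncn (C / d)).+1.
have hk : C / d < k%:R by rewrite /k; case/andP: (truncn_itv (ltW (divr_gt0 C0 d0))).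
have hk' : C < k%:R * d by rewrite -ltr_pdivrMr.
have := h k; have := @bernoulli d k (ltW d0).
have -> : 1 + d = x / y by rewrite /d addrC subrK.
rewrite exprMn exprVn => hb hc.
have yk : 0 < y ^+ k by rewrite exprn_gt0.
have h3 : x ^+ k / y ^+ k <= C by rewrite ler_pdivrMr.
have := le_trans hb h3; lra.
Qed.

Hypothesis H11 : nrm (vec2 N 1 1) != 1.

Definition c := f 1 1.

Lemma s2 : s 2 = c. Proof. by rewrite sS s1. Qed.

Lemma c_gt1 : 1 < c.
Proof.
have h : nrm (vec2 N 1 1) = c by rewrite nrm_vec2 cabs1.
rewrite lt_neqAle eq_sym -h H11 /= h; have := f_ge 1 1; by rewrite normr1.
Qed.

Lemma c_le2 : c <= 2.
Proof. by have := f_le 1 1; rewrite normr1. Qed.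

Definition alpha := ln c / ln 2.

Lemma ln2_gt0 : 0 < ln (2 : R).
Proof. by apply: ln_gt0; rewrite ltr1n. Qed.

Lemma alpha_gt0 : 0 < alpha.
Proof. by rewrite /alpha divr_gt0 ?ln2_gt0 // ln_gt0 // c_gt1. Qed.

Lemma alpha_le1 : alpha <= 1.
Proof.
rewrite /alpha ler_pdivrMr ?ln2_gt0 // mul1r ler_ln ?c_le2 //.
  by rewrite posrE (lt_trans ltr01 c_gt1).
by rewrite posrE.
Qed.

Lemma pow2_alpha : 2 `^ alpha = c.
Proof.
rewrite /powR /alpha; case: ifPn => [h|_]; first by move: h; rewrite pnatr_eq0.
rewrite divfK; last by rewrite gt_eqF // ln2_gt0.
by rewrite lnK // posrE (lt_trans ltr01 c_gt1).
Qed.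

Lemma powRX (x a : R) k : 0 <= x -> (x ^+ k) `^ a = (x `^ a) ^+ k.
Proof.
move=> x0; rewrite -powR_mulrn // -powRrM mulrC powRrM powR_mulrn //.
exact: powR_ge0.
Qed.

Lemma s_exp n k : s (n ^ k) = s n ^+ k.
Proof.
elim: k => [|k IH]; first by rewrite expn0 expr0 s1.
by rewrite expnS s_mul IH exprS.
Qed.

Lemma bounds m : (0 < m)%N -> exists j,
  [/\ c ^+ j <= s m, s m <= c ^+ j.+1, c ^+ j <= m%:R `^ alpha
    & m%:R `^ alpha <= c ^+ j.+1].
Proof.
move=> m0; exists (trunc_log 2 m).
have h1 := trunc_logP (isT : (1 < 2)%N) m0.
have h2 := trunc_log_ltn m (isT : (1 < 2)%N).
have e j : c ^+ j = ((2 ^ j)%N%:R) `^ alpha by rewrite natrX powRX // pow2_alpha.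
have e' j : c ^+ j = s (2 ^ j) by rewrite s_exp s2.
split.
- by rewrite e'; apply: s_mono.
- by rewrite e'; apply: s_mono; apply: ltnW.
- rewrite e; apply: ge0_ler_powR; rewrite ?nnegrE ?ler_nat //; exact: ltW alpha_gt0.
- rewrite e; apply: ge0_ler_powR; rewrite ?nnegrE ?ler_nat //; first exact: ltW alpha_gt0.
  exact: ltnW.
Qed.

Lemma s_pow n : s n = n%:R `^ alpha.
Proof.
case: n => [|n]; first by rewrite s0 powR0 // gt_eqF // alpha_gt0.
have a1 : 1 <= s n.+1 by rewrite -s1; apply: s_mono.
have b1 : 1 <= n.+1%:R `^ alpha.
  have e : 1 `^ alpha = (1:R) by rewrite powR1.
  rewrite -[X in X <= _]e; apply: ge0_ler_powR; rewrite ?nnegrE ?ler1n //.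
  exact: ltW alpha_gt0.
have c0 : 0 < c by apply: lt_trans ltr01 c_gt1.
have c1 : 1 <= c by apply: ltW c_gt1.
have a0 : 0 < s n.+1 by exact: lt_le_trans ltr01 a1.
have b0 : 0 < n.+1%:R `^ alpha by exact: lt_le_trans ltr01 b1.
apply/eqP; rewrite eq_le; apply/andP; split.
  apply: (ratio_le _ _ c) => //.
  move=> k; rewrite -s_exp -powRX //.
  have hm : (0 < n.+1 ^ k)%N by rewrite expn_gt0.
  have [j [h1 h2 h3 h4]] := bounds _ hm.
  rewrite natrX in h3 h4.
  apply: (le_trans h2); rewrite exprS ler_pM2l //.
apply: (ratio_le _ _ c) => //.
move=> k; rewrite -s_exp -powRX //.
have hm : (0 < n.+1 ^ k)%N by rewrite expn_gt0.
  have [j [h1 h2 h3 h4]] := bounds _ hm.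
rewrite natrX in h3 h4.
apply: (le_trans h4); rewrite exprS ler_pM2l //.
Qed.


Lemma alpha0 : 0 <= alpha. Proof. exact: ltW alpha_gt0. Qed.

Lemma powa_le (x y : R) : 0 <= x -> x <= y -> x `^ alpha <= y `^ alpha.
Proof.
move=> x0 xy; apply: ge0_ler_powR; rewrite ?nnegrE //; first exact: alpha0.
exact: le_trans xy.
Qed.

Lemma powpa (x : R) : 0 <= x -> (x `^ alpha^-1) `^ alpha = x.
Proof.
by move=> x0; rewrite -powRrM mulVf ?powRr1 // gt_eqF // alpha_gt0.
Qed.

Lemma conclude (a b K : R) : (forall m : nat, `|a - b| * m.+1%:R <= K) -> a = b.
Proof.
move=> h; apply/eqP; rewrite -subr_eq0 -normr_eq0; apply/negPn/negP => ne.
have d0 : 0 < `|a - b| by rewrite lt_def ne normr_ge0.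
have K0 : 0 <= K by apply: le_trans (h 0%N); rewrite mulr_ge0.
pose m := Num.truncn (K / `|a - b|).
have hm : K / `|a - b| < m.+1%:R.
  by case/andP: (truncn_itv (divr_ge0 K0 (ltW d0))).
have := h m; rewrite ltr_pdivrMr // mulrC in hm; lra.
Qed.

Lemma main_eq v : nrm v = (\sum_(j < N) cabs (v 0 j) `^ alpha^-1) `^ alpha.
Proof.
pose r j := cabs (v 0 j).
have r0 j : 0 <= r j by apply: cabs_ge0.
pose v' := \row_(j < N) cR (r j).
have ev : nrm v = nrm v'.
  by apply: nrm_abs => j; rewrite mxE cabs_cR ger0_norm.
set T := _ `^ alpha.
apply: (conclude _ _ (N%:R * 2)) => m.
pose M : R := m.+1%:R.
have M0 : 0 < M by [].
pose X j := (M * r j) `^ alpha^-1.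
have X0 j : 0 <= X j by apply: powR_ge0.
pose n j := Num.truncn (X j).
have hX j : (n j)%:R <= X j < (n j).+1%:R by apply: truncn_itv.
have XA j : X j `^ alpha = M * r j by rewrite powpa // mulr_ge0 // ltW.
have ent j : `|M * r j - s (n j)| <= 1.
  have [h1 h2] := andP (hX j).
  have a1 : s (n j) <= M * r j by rewrite s_pow -XA powa_le.
  have a2 : M * r j <= s (n j) + 1.
    apply: le_trans (s_succ' _); rewrite s_pow -XA; apply: powa_le => //; exact: ltW.
  rewrite ler_norml; apply/andP; split; lra.
pose S := (\sum_(j < N) n j)%N.
pose w := \row_(j < N) cR (s (n j)).
have ew : nrm w = s S.
  by apply: nrm_s => j; rewrite mxE cabs_cR ger0_norm // s_ge0.
have hA : `|M * nrm v - s S| <= N%:R.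
  have e1 : M * nrm v = nrm (cR M *: v') by rewrite nrmZ cabs_cR ger0_norm // ev.
  rewrite e1 -ew; apply: le_trans (nrm_lip _ _) _.
  apply: le_trans (nrm_le_sum _) _.
  have -> : N%:R = \sum_(j < N) (1 : R) by rewrite sumr_const card_ord.
  apply: ler_sum => j _; rewrite !mxE.
  have -> : cR M * cR (r j) - cR (s (n j)) = cR (M * r j - s (n j)).
    by rewrite /cR rmorphB rmorphM.
  by rewrite cabs_cR.
have eT : M * T = (\sum_(j < N) X j) `^ alpha.
  have eM : M = (M `^ alpha^-1) `^ alpha by rewrite powpa // ltW.
  rewrite /T {1}eM -powRM; last by apply: sumr_ge0 => j _; apply: powR_ge0.
    congr (_ `^ _); rewrite mulr_sumr; apply: eq_bigr => j _.
    by rewrite /X powRM // ltW.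
  exact: powR_ge0.
have hB : `|s S - M * T| <= N%:R.
  have b1 : s S <= M * T.
    rewrite eT s_pow; apply: powa_le => //.
    rewrite /S natr_sum; apply: ler_sum => j _; by case/andP: (hX j).
  have b2 : M * T <= s S + N%:R.
    apply: (@le_trans _ _ (s (S + N))); last first.
      rewrite s_add; apply: le_trans (f_le _ _) _.
      by rewrite !ger0_norm ?s_ge0 // lerD2l s_le.
    rewrite eT s_pow; apply: powa_le; first by apply: sumr_ge0.
    rewrite natrD /S natr_sum.
    have -> : N%:R = \sum_(j < N) (1 : R) by rewrite sumr_const card_ord.
    rewrite -big_split /=; apply: ler_sum => j _.
    by case/andP: (hX j) => _ /ltW; rewrite -natr1.
  rewrite ler_norml; apply/andP; split; lra.
have : `|M * nrm v - M * T| <= N%:R * 2.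
  have := ler_normD (M * nrm v - s S) (s S - M * T).
  rewrite addrA subrK => h; apply: le_trans h _; lra.
by rewrite -mulrBr normrM (ger0_norm (ltW M0)) mulrC.
Qed.

End Proof.

Theorem theorem6 (R : realType) (N : nat) (nrm : 'rV[R[i]]_N -> R) :
  (3 <= N)%N ->
  is_norm nrm ->
  perm_invariant nrm ->
  nrm (vec2 N 1 1) != 1 ->
  (forall v w : 'rV[R[i]]_N, disjoint_supp v w ->
     nrm (v + w) = nrm (vec2 N (cR (nrm v)) (cR (nrm w)))) ->
  exists p : R, 1 <= p /\
    forall c : 'rV[R[i]]_N, (forall j, is_rat (cabs (c 0 j))) ->
      nrm c = (\sum_(j < N) (cabs (c 0 j)) `^ p) `^ p^-1.
Proof.
move=> N3 Hn Hp H11 Hd.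
exists (@alpha R N nrm)^-1; split.
  rewrite invf_ge1; first by apply: alpha_le1.
  by apply: alpha_gt0.
by move=> v _; rewrite invrK; apply: main_eq.
Qed.
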